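(* Consider a maxout network $\mathcal N$ with a single linear output. The set of parameter values $\theta$ for which the represented function has the same gradient on two distinct (nonempty) activation regions is a Lebesgue null set. In particular, for almost every $\theta$, the linear regions of the represented function and its (nonempty, full-dimensional) activation regions correspond to each other.
   Context: A rank-$K$ maxout unit computes $y\mapsto\max_{k\in[K]}\{w_k\cdot y+b_k\}$. The network has hidden layers whose coordinates are rank-$K$ maxout units followed by a linear output layer; hidden units are indexed by $z\in[N]$ and $\zeta_{z,k}(x;\theta)$ denotes the $k$-th pre-activation feature of unit $z$ as a function of the network input $x$. An activation pattern is a tuple $J=(J_z)_{z\in[N]}$ of nonempty sets $J_z\subseteq[K]$, with activation region $\mathcal R(J,\theta)=\{x:\arg\max_k\zeta_{z,k}(x;\theta)=J_z\ \forall z\}$; on each activation region the network is affine, with a constant gradient. A linear region is a maximal connected subset of $\mathbb{R}^{n_0}$ on which the represented function has constant gradient. *)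

(* Defs.v *)
From mathcomp Require Import all_boot all_order all_algebra.
From mathcomp Require Import reals.
Set Implicit Arguments. Unset Strict Implicit. Unset Printing Implicit Defensive.
Import Order.TTheory GRing.Theory Num.Theory.
Local Open Scope ring_scope.

Definition lebesgue_null (R : realType) (P : finType) (S : (P -> R) -> Prop) : Prop :=
  forall eps : R, 0 < eps ->
  exists a b : nat -> P -> R,
    (forall m p, a m p <= b m p) /\
    (forall th, S th -> exists m, forall p, a m p <= th p <= b m p) /\
    (forall N, \sum_(m < N) \prod_(p : P) (b m p - a m p) <= eps).

(* n0 = input dimension, ws = widths of the hidden layers (L = size ws),
   K = maxout rank.  Layer widths: wd 0 = n0, wd l.+1 = l-th hidden width. *)
Definition wd (n0 : nat) (ws : seq nat) (l : nat) : nat :=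
  if l is l'.+1 then nth 0%N ws l' else n0.

(* parameters of hidden layer l (0-based): for unit z of layer l+1, piece k,
   either the weight on coordinate j of layer l (Some j) or the bias (None) *)
Definition hid_param_at (n0 : nat) (ws : seq nat) (K : nat) (l : 'I_(size ws)) :=
  ('I_(wd n0 ws (nat_of_ord l).+1) * 'I_K * option 'I_(wd n0 ws l))%type.
Definition HidParam (n0 : nat) (ws : seq nat) (K : nat) :=
  {l : 'I_(size ws) & @hid_param_at n0 ws K l}.
(* all parameters: hidden ones, and the linear output layer
   (weight on the last hidden unit z (Some z), or output bias (None)) *)
Definition Param (n0 : nat) (ws : seq nat) (K : nat) :=
  (HidParam n0 ws K + option 'I_(wd n0 ws (size ws)))%type.

Definition Unit (n0 : nat) (ws : seq nat) :=
  {l : 'I_(size ws) & 'I_(wd n0 ws (nat_of_ord l).+1)}.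

Section Net.
Variables (R : realType) (n0 : nat) (ws : seq nat) (K : nat).
Variable th : Param n0 ws K -> R.

Definition maxK (g : 'I_K -> R) : R :=
  \big[Num.max/head 0 (map g (enum 'I_K))]_(k < K) g k.

Definition preact (hprev : nat -> R) (lo : 'I_(size ws))
    (zo : 'I_(wd n0 ws (nat_of_ord lo).+1)) (k : 'I_K) : R :=
  \sum_(j < wd n0 ws lo)
     th (inl (existT (@hid_param_at n0 ws K) lo (zo, k, Some j))) * hprev j
  + th (inl (existT (@hid_param_at n0 ws K) lo (zo, k, None))).

(* output of layer l (layer 0 = input x), coordinates as nat (0 outside) *)
Fixpoint layer (x : 'I_n0 -> R) (l : nat) : nat -> R :=
  if l is l'.+1 then fun z =>
    match (insub l' : option 'I_(size ws)) with
    | Some lo =>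
        match (insub z : option 'I_(wd n0 ws (nat_of_ord lo).+1)) with
        | Some zo => maxK (@preact (layer x l') lo zo)
        | None => 0
        end
    | None => 0
    end
  else fun j => if (insub j : option 'I_n0) is Some jo then x jo else 0.

Definition zeta (x : 'I_n0 -> R) (u : Unit n0 ws) (k : 'I_K) : R :=
  @preact (layer x (nat_of_ord (tag u))) (tag u) (tagged u) k.

Definition net (x : 'I_n0 -> R) : R :=
  \sum_(z < wd n0 ws (size ws))
     th (inr (Some z)) * layer x (size ws) z + th (inr None).

Definition act_region (J : {ffun Unit n0 ws -> {set 'I_K}}) (x : 'I_n0 -> R) : Prop :=
  forall u, [set k | [forall k', zeta x u k' <= zeta x u k]] = J u.

End Net.

Definition is_pattern (n0 : nat) (ws : seq nat) (K : nat)
  (J : {ffun Unit n0 ws -> {set 'I_K}}) : Prop :=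
  forall u, J u != set0.

Definition in_ball (R : realType) (n0 : nat) (x0 : 'I_n0 -> R) (r : R)
  (x : 'I_n0 -> R) : Prop := forall i, `|x i - x0 i| < r.

(* "the represented function has gradient g on the (full-dimensional)
   activation region R(J,theta)": some nonempty open ball lies in the region
   and the function is affine with gradient g on it *)
Definition region_has_gradient (R : realType) (n0 : nat) (ws : seq nat) (K : nat)
  (th : Param n0 ws K -> R) (J : {ffun Unit n0 ws -> {set 'I_K}})
  (g : 'I_n0 -> R) : Prop :=
  exists (x0 : 'I_n0 -> R) (r c : R), 0 < r /\
    forall x, in_ball x0 r x ->
      act_region th J x /\ net th x = \sum_(i < n0) g i * x i + c.

(* Main.v *)
Require Import Defs.
From mathcomp Require Import all_boot all_order all_algebra.
From mathcomp Require Import reals.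
From mathcomp Require Import boolp ring lra zify.
Set Implicit Arguments. Unset Strict Implicit. Unset Printing Implicit Defensive.
Import Order.TTheory GRing.Theory Num.Theory.
Local Open Scope ring_scope.

Section Null.
Variables (R : realType) (P : finType).
Implicit Types (D : {set P}) (A B : (P -> R) -> Prop).

Definition cover D A (eps : R) :=
  exists (act : nat -> bool) (a b : nat -> P -> R),
    [/\ (forall m p, a m p <= b m p),
        (forall th, A th -> exists m, act m /\ forall p, p \in D -> a m p <= th p <= b m p) &
        (forall N, \sum_(m < N | act m) \prod_(p in D) (b m p - a m p) <= eps)].

Definition nullD D A := forall eps : R, 0 < eps -> cover D A eps.

Lemma nullD_sub D A B : (forall th, A th -> B th) -> nullD D B -> nullD D A.
Proof.
move=> AB hB eps e0; have [act [a [b [h1 h2 h3]]]] := hB eps e0.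
by exists act, a, b; split=> // th /AB /h2.
Qed.

Lemma nullD0 D : nullD D (fun _ => False).
Proof.
move=> eps e0; exists (fun _ => false), (fun _ _ => 0), (fun _ _ => 0); split=> //.
by move=> N; rewrite big_mkcond big1 ?ltW.
Qed.

Lemma sum_sub_uniq (T : eqType) (s t : seq T) (G : T -> R) :
  uniq s -> uniq t -> {subset s <= t} -> (forall y, 0 <= G y) ->
  \sum_(y <- s) G y <= \sum_(y <- t) G y.
Proof.
move=> us ut st G0.
have hp : perm_eq [seq y <- t | y \in s] s.
  apply: uniq_perm; first exact: filter_uniq.
    exact: us.
  by move=> y; rewrite mem_filter; case: (boolP (y \in s)) => // /st ->.
apply: (@le_trans _ _ (\sum_(y <- t | y \in s) G y)).
  rewrite le_eqVlt; apply/orP; left; apply/eqP.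
  rewrite -[RHS]big_filter; apply: perm_big; by rewrite perm_sym.
rewrite [X in _ <= X](bigID (fun y => y \in s)) /=.
by rewrite lerDl sumr_ge0.
Qed.

Lemma cover_count (T : countType) D A eps (act : T -> bool) (a b : T -> P -> R) :
  (forall t p, a t p <= b t p) ->
  (forall th, A th -> exists t, act t /\ forall p, p \in D -> a t p <= th p <= b t p) ->
  (forall s : seq T, uniq s -> \sum_(t <- s | act t) \prod_(p in D) (b t p - a t p) <= eps) ->
  cover D A eps.
Proof.
move=> hab hcov hsum.
pose act' m := if @pickle_inv T m is Some t then act t else false.
pose a' m := if @pickle_inv T m is Some t then a t else fun _ => 0.
pose b' m := if @pickle_inv T m is Some t then b t else fun _ => 0.
exists act', a', b'; split.
- by move=> m p; rewrite /a' /b'; case: (pickle_inv m).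
- move=> th /hcov [t [act_t ht]]; exists (pickle t).
  by rewrite /act' /a' /b' pickleK_inv.
move=> N.
pose V t := if act t then \prod_(p in D) (b t p - a t p) else 0.
pose H m := if @pickle_inv T m is Some t then V t else 0.
have -> : \sum_(m < N | act' m) \prod_(p in D) (b' m p - a' m p) = \sum_(m <- iota 0 N) H m.
  have -> : iota 0 N = index_iota 0 N by rewrite /index_iota subn0.
  rewrite big_mkcond big_mkord.
  apply: eq_bigr => m _; rewrite /H /act' /a' /b' /V.
  by case: (pickle_inv m).
pose s := pmap (@pickle_inv T) (iota 0 N).
have ms : map pickle s = filter (fun m => @pickle_inv T m) (iota 0 N).
  exact: (pmap_filter (@pickle_invK T)).
have us : uniq s by apply: (@map_uniq _ _ pickle); rewrite ms filter_uniq // iota_uniq.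
have <- : \sum_(t <- s) V t = \sum_(m <- iota 0 N) H m.
  have -> : \sum_(t <- s) V t = \sum_(m <- map pickle s) H m.
    by rewrite big_map; apply: eq_bigr => t _; rewrite /H pickleK_inv.
  rewrite ms big_filter [RHS](bigID (fun i => @pickle_inv T i)) /=.
  rewrite [X in _ = _ + X]big1 ?addr0 // => i.
  by rewrite /H; case: (pickle_inv i).
by rewrite -big_mkcond; apply: hsum.
Qed.


Lemma geo_sum (N : nat) : \sum_(n < N) ((2%:R : R)^-1) ^+ n.+1 <= 1.
Proof.
have h : forall N, \sum_(n < N) ((2%:R : R)^-1) ^+ n.+1 = 1 - ((2%:R : R)^-1) ^+ N.
  elim=> [|n IH]; first by rewrite big_ord0 expr0 subrr.
  rewrite big_ord_recr /= IH exprS.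
  set y := _ ^+ n. set x := (2%:R : R)^-1.
  have hx : x = 1 - x by rewrite /x; field.
  by rewrite [X in 1 - X * _ ]hx; ring.
rewrite h lerBlDr lerDl; apply: exprn_ge0; rewrite invr_ge0; lra.
Qed.

Lemma nullD_cunion D (A : nat -> (P -> R) -> Prop) :
  (forall n, nullD D (A n)) -> nullD D (fun th => exists n, A n th).
Proof.
move=> hA eps e0.
set x := (2%:R : R)^-1.
have x0 : 0 < x by rewrite /x invr_gt0; lra.
have hc : forall n, exists t : (nat -> bool) * ((nat -> P -> R) * (nat -> P -> R)),
  [/\ (forall m p, t.2.1 m p <= t.2.2 m p),
      (forall th, A n th -> exists m, t.1 m /\ forall p, p \in D -> t.2.1 m p <= th p <= t.2.2 m p) &
      (forall N, \sum_(m < N | t.1 m) \prod_(p in D) (t.2.2 m p - t.2.1 m p) <= eps * x ^+ n.+1)].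
  move=> n; have [act [a [b h]]] := hA n (eps * x ^+ n.+1) (mulr_gt0 e0 (exprn_gt0 _ x0)).
  by exists (act, (a, b)).
have [F hF] := choice hc.
apply: (@cover_count (nat * nat)%type D _ eps
   (fun t => (F t.1).1 t.2) (fun t => (F t.1).2.1 t.2) (fun t => (F t.1).2.2 t.2)).
- by move=> t p; have [h1 _ _] := hF t.1; apply: h1.
- move=> th [n hn]; have [_ h2 _] := hF n.
  by have [m hm] := h2 th hn; exists (n, m).
move=> s us.
pose V t := if (F t.1).1 t.2 then \prod_(p in D) ((F t.1).2.2 t.2 p - (F t.1).2.1 t.2 p) else 0.
have V0 : forall t, 0 <= V t.
  move=> t; rewrite /V; case: ifP => // _; apply: prodr_ge0 => p _.
  by have [h1 _ _] := hF t.1; rewrite subr_ge0.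
rewrite big_mkcond /=.
pose M := (\max_(t <- s) maxn t.1 t.2).+1.
have sub : {subset s <= [seq (n, m) | n <- iota 0 M, m <- iota 0 M]}.
  move=> [n m] hs; apply: allpairs_f; rewrite mem_iota /= add0n ltnS.
    have := @leq_bigmax_seq _ s xpredT (fun t : nat * nat => maxn t.1 t.2) (n, m) hs isT.
    move=> h; apply: leq_trans h; exact: leq_maxl.
  have := @leq_bigmax_seq _ s xpredT (fun t : nat * nat => maxn t.1 t.2) (n, m) hs isT.
  move=> h; apply: leq_trans h; exact: leq_maxr.
have ua : uniq [seq (n, m) | n <- iota 0 M, m <- iota 0 M].
  by apply: allpairs_uniq; rewrite ?iota_uniq // => [[a1 a2]] [b1 b2] _ _ /= [-> ->].
apply: (le_trans (sum_sub_uniq us ua sub V0)).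
rewrite big_allpairs.
apply: (@le_trans _ _ (\sum_(n <- iota 0 M) eps * x ^+ n.+1)).
  apply: ler_sum => n _.
  have [_ _ h3] := hF n.
  apply: le_trans (h3 M).
  have -> : iota 0 M = index_iota 0 M by rewrite /index_iota subn0.
  by rewrite big_mkord [X in _ <= X]big_mkcond.
rewrite -mulr_sumr -[X in _ <= X]mulr1 ler_pM2l //.
have -> : iota 0 M = index_iota 0 M by rewrite /index_iota subn0.
by rewrite big_mkord; apply: geo_sum.
Qed.


Lemma nullD_union_count D (T : countType) (A : T -> (P -> R) -> Prop) :
  (forall t, nullD D (A t)) -> nullD D (fun th => exists t, A t th).
Proof.
move=> hA.
apply: (@nullD_sub _ _ (fun th => exists n, (fun n th => exists t, pickle t = n /\ A t th) n th)).
  by move=> th [t ht]; exists (pickle t), t.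
apply: nullD_cunion => n.
case: (pselect (exists t : T, pickle t = n)) => [[t ht]|hn].
  apply: nullD_sub (hA t) => th [t' [ht' h]].
  by rewrite -((pcan_inj pickleK) _ _ (etrans ht' (esym ht))).
apply: nullD_sub (nullD0 D) => th [t [ht _]]; apply: hn; by exists t.
Qed.

Lemma nullD_ext D p A : p \notin D -> nullD D A -> nullD (p |: D) A.
Proof.
move=> pD hA.
apply: (@nullD_sub _ _ (fun th => exists j : nat, A th /\ `|th p| <= j%:R)).
  move=> th hth; have := archi_boundP (normr_ge0 (th p)) => h.
  by eexists; split; [exact: hth | exact: ltW h].
apply: nullD_cunion => j eps e0.
have je : 0 < (2 * j + 1)%:R :> R by rewrite ltr0n addn1.
have [act [a [b [h1 h2 h3]]]] := hA _ (divr_gt0 e0 je).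
exists act, (fun m q => if q == p then - j%:R else a m q),
            (fun m q => if q == p then j%:R else b m q); split.
- move=> m q; case: (q == p) => //; apply: (@le_trans _ _ 0); rewrite ?oppr_le0 ler0n //.
- move=> th [hth hj]; have [m [am hm]] := h2 th hth; exists m; split => // q.
  rewrite in_setU1; case: eqP => [-> _|_ /= qD]; last exact: hm.
  by rewrite -ler_norml.
move=> N.
have -> : \sum_(m < N | act m) \prod_(q in p |: D)
    ((if q == p then j%:R else b m q) - (if q == p then - j%:R else a m q))
  = (2 * j)%:R * \sum_(m < N | act m) \prod_(q in D) (b m q - a m q).
  rewrite mulr_sumr; apply: eq_bigr => m _; rewrite big_setU1 //= eqxx.
  congr (_ * _); first by rewrite opprK natrM mulr2n mulrDl mul1r.
  by apply: eq_bigr => q qD; case: eqP qD => // ->; rewrite (negbTE pD).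
apply: (@le_trans _ _ ((2 * j)%:R * (eps / (2 * j + 1)%:R))).
  by apply: ler_wpM2l => //; apply: h3.
rewrite mulrCA ger_pMr // ler_pdivrMr // mul1r ler_nat; lia.
Qed.


Lemma count_valid (D' : {set P}) (K : nat) :
  \sum_(f : {ffun P -> 'I_K.+1}) ([forall q, (q \notin D') ==> (f q == ord0)])%:R
  = (K.+1)%:R ^+ #|D'| :> R.
Proof.
pose F (q : P) (j : 'I_K.+1) : R := if q \in D' then 1 else (j == ord0)%:R.
have e1 : forall f : {ffun P -> 'I_K.+1},
    ([forall q, (q \notin D') ==> (f q == ord0)])%:R = \prod_q F q (f q).
  move=> f; case: forallP => [hf|hf].
    by rewrite big1 // => q _; rewrite /F; case: ifP => // qD; have := hf q; rewrite qD /= => /eqP ->; rewrite eqxx.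
  have [q hq] : exists q, ~~ ((q \notin D') ==> (f q == ord0)).
    by apply/existsP; rewrite -negb_forall; apply/forallP.
  move: hq; rewrite negb_imply => /andP [qD fq].
  by rewrite (bigD1 q) //= /F (negbTE qD) (negbTE fq) mul0r.
rewrite (eq_bigr _ (fun f _ => e1 f)) -(bigA_distr_bigA F).
rewrite -prodr_const [RHS]big_mkcond /=.
apply: eq_bigr => q _; rewrite /F; case: ifP => _.
  by rewrite sumr_const card_ord.
rewrite (bigD1 ord0) //= ?eqxx big1 ?addr0 // => j /negbTE ->; done.
Qed.

Lemma cell_exists (n N : nat) (t : R) : (0 < N)%N -> `|t| <= n%:R ->
  exists i : 'I_(2 * n * N).+1, - n%:R + i%:R * N%:R^-1 <= t <= - n%:R + (i%:R + 1) * N%:R^-1.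
Proof.
move=> N0 tn.
have hN : 0 < N%:R :> R by rewrite ltr0n.
have ht0 : 0 <= (t + n%:R) * N%:R.
  by apply: mulr_ge0; [rewrite -lerBlDr sub0r; move: tn; rewrite ler_norml => /andP[] | apply: ltW].
have [lo hi] := andP (truncn_itv ht0).
set i := Num.Def.trunc _ in lo hi.
have iK : (i <= 2 * n * N)%N.
  rewrite -(ler_nat R); apply: le_trans lo _.
  rewrite natrM natrM ler_pM2r //.
  move: tn; rewrite ler_norml => /andP[_ h]; rewrite mulr2n mulrDl mul1r lerD2r //.
exists (inord i); rewrite inordK ?ltnS //.
have e : (i.+1)%:R = i%:R + 1 :> R by rewrite -addn1 natrD.
have h1 : i%:R * N%:R^-1 <= t + n%:R by rewrite ler_pdivrMr.
have h2 : t + n%:R <= (i%:R + 1) * N%:R^-1 by rewrite ler_pdivlMr // -e ltW.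
apply/andP; split; lra.
Qed.

Lemma graph_diff (n : nat) (a a0 b b0 t t0 La Lb Ma Mb s : R) :
  1 <= n%:R * `|a| -> 1 <= n%:R * `|a0| -> a * t + b = 0 -> a0 * t0 + b0 = 0 ->
  `|a - a0| <= La * s -> `|b - b0| <= Lb * s -> `|a0| <= Ma -> `|b0| <= Mb ->
  `|t - t0| <= n%:R ^+ 2 * (Lb * Ma + Mb * La) * s.
Proof.
move=> ha ha0 e e0 hda hdb hMa hMb.
have key : a * a0 * (t - t0) = (a - a0) * b0 + a0 * (b0 - b).
  have -> : b = - (a * t) by apply: (@addrI _ (a * t)); rewrite e addrN.
  have -> : b0 = - (a0 * t0) by apply: (@addrI _ (a0 * t0)); rewrite e0 addrN.
  ring.
have h1 : 1 <= n%:R ^+ 2 * `|a * a0| by rewrite normrM; nra.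
have hn : 0 <= n%:R ^+ 2 :> R by apply: exprn_ge0.
have hkey : `|a * a0 * (t - t0)| <= (Lb * Ma + Mb * La) * s.
  rewrite key; apply: le_trans (ler_normD _ _) _; rewrite !normrM.
  have := normr_ge0 (a - a0); have := normr_ge0 b0; have := normr_ge0 a0; have := normr_ge0 (b0 - b).
  rewrite distrC in hdb; nra.
rewrite normrM in hkey.
have := normr_ge0 (t - t0); have := normr_ge0 (a * a0); nra.
Qed.


Definition inbox D (n : nat) (th : P -> R) := forall q, q \in D -> `|th q| <= n%:R.

Definition LB D (f : (P -> R) -> R) := forall n : nat, exists M L : R,
  [/\ 0 <= M, 0 <= L, (forall th, inbox D n th -> `|f th| <= M) &
      (forall th th' s, 0 <= s -> inbox D n th -> inbox D n th' ->
         (forall q, q \in D -> `|th q - th' q| <= s) -> `|f th - f th'| <= L * s)].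

Lemma bound_all (th : P -> R) (e : R) : 0 <= e -> exists n : nat, (forall q, `|th q| <= n%:R) /\ e <= n%:R.
Proof.
move=> e0.
set B := \sum_(q : P) `|th q|.
have hB : forall q, `|th q| <= B.
  by move=> q; rewrite /B (bigD1 q) //= lerDl sumr_ge0.
have B0 : 0 <= B + e by rewrite addr_ge0 ?sumr_ge0.
have := archi_boundP B0 => h.
exists (Num.Def.archi_bound (B + e)); split.
  move=> q; apply: le_trans (hB q) _; apply: ltW; apply: le_lt_trans h; rewrite lerDl //.
apply: ltW; apply: le_lt_trans h; rewrite lerDr sumr_ge0 //.
Qed.

Lemma nullD_graph D p (a b : (P -> R) -> R) : p \in D -> LB (D :\ p) a -> LB (D :\ p) b ->
  nullD D (fun th => a th != 0 /\ a th * th p + b th = 0).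
Proof.
move=> pD hLa hLb.
set D' := D :\ p.
apply: (@nullD_sub _ _ (fun th => exists n : nat,
   [/\ inbox D' n th, 1 <= n%:R * `|a th| & a th * th p + b th = 0])).
  move=> th [a0 e].
  have ha : 0 <= `|a th|^-1 by rewrite invr_ge0.
  have [n [h1 h2]] := bound_all th ha.
  exists n; split; [by move=> q _; apply: h1 | | exact: e].
  by rewrite -ler_pdivrMr ?normr_gt0 // mul1r.
apply: nullD_cunion => n eps e0.
have [Ma [La [Ma0 La0 hMa hLa']]] := hLa n.
have [Mb [Lb [Mb0 Lb0 hMb hLb']]] := hLb n.
set C := n%:R ^+ 2 * (Lb * Ma + Mb * La).
have C0 : 0 <= C by rewrite /C; apply: mulr_ge0; [apply: exprn_ge0 | apply: addr_ge0; apply: mulr_ge0].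
set d := #|D'|.
set Q := 2%:R * C * (2 * n + 1)%:R ^+ d.
have Q0 : 0 <= Q by rewrite /Q; apply: mulr_ge0; [apply: mulr_ge0 | apply: exprn_ge0].
set N := (Num.Def.archi_bound (Q / eps)).+1.
have N0 : (0 < N)%N by [].
have hN : 0 < N%:R :> R by rewrite ltr0n.
have QN : Q / N%:R <= eps.
  rewrite ler_pdivrMr // -ler_pdivrMl // mulrC; apply: ltW.
  apply: lt_le_trans (archi_boundP (divr_ge0 Q0 (ltW e0))) _.
  by rewrite ler_nat.
set s := N%:R^-1 : R.
have s0 : 0 < s by rewrite invr_gt0.
set K := (2 * n * N)%N.
pose G th := [/\ inbox D' n th, 1 <= n%:R * `|a th| & a th * th p + b th = 0].
pose cellmem (f : {ffun P -> 'I_K.+1}) (th : P -> R) :=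
  forall q, q \in D' -> - n%:R + (f q)%:R * s <= th q <= - n%:R + ((f q)%:R + 1) * s.
pose sel (f : {ffun P -> 'I_K.+1}) : option (P -> R) :=
  match pselect (exists th0, G th0 /\ cellmem f th0) with
  | left h => Some (sval (cid h)) | right _ => None end.
have selP : forall f th0, sel f = Some th0 -> G th0 /\ cellmem f th0.
  move=> f th0; rewrite /sel; case: pselect => // h [<-]; exact: (svalP (cid h)).
have selN : forall f th, G th -> cellmem f th -> exists th0, sel f = Some th0.
  move=> f th hG hc; rewrite /sel; case: pselect => [h|h]; first by eexists.
  by exfalso; apply: h; exists th.
pose valid (f : {ffun P -> 'I_K.+1}) := [forall q, (q \notin D') ==> (f q == ord0)].
pose t0 f := if sel f is Some th0 then th0 p else 0.
pose act f := valid f && (sel f : bool).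
pose lo f q := if q == p then t0 f - C * s else - n%:R + (f q)%:R * s.
pose hi f q := if q == p then t0 f + C * s else - n%:R + ((f q)%:R + 1) * s.
apply: (@cover_count _ D _ eps act lo hi).
- move=> f q; rewrite /lo /hi; case: ifP => _.
    by rewrite lerD2l; apply: (@le_trans _ _ 0); rewrite ?oppr_le0; apply: mulr_ge0 => //; apply: ltW.
  by rewrite lerD2l ler_pM2r // lerDl.
- move=> th hG; have [hin ha he] := hG.
  have : forall q, exists i : 'I_K.+1, (q \in D' ->
      - n%:R + i%:R * s <= th q <= - n%:R + (i%:R + 1) * s) /\ (q \notin D' -> i = ord0).
    move=> q; case: (boolP (q \in D')) => qD.
      have [i hiq] := cell_exists N0 (hin q qD); by exists i.
    by exists ord0.
  case/fin_all_exists => g hg.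
  pose f := [ffun q => g q].
  have hc : cellmem f th by move=> q qD; rewrite ffunE; apply: (hg q).1.
  have hv : valid f.
    apply/forallP => q; apply/implyP => qD; rewrite ffunE; apply/eqP; exact: (hg q).2.
  have [th0 hs] := selN f th hG hc.
  have [[hin0 ha0 he0] hc0] := selP f th0 hs.
  exists f; split; first by rewrite /act hv hs.
  move=> q qD; rewrite /lo /hi; case: eqP => [->|qp].
    rewrite /t0 hs -ler_distl.
    have hq : forall q, q \in D' -> `|th q - th0 q| <= s.
      move=> q' qD'; have := hc q' qD'; have := hc0 q' qD'; rewrite ler_distl.
      move=> /andP[h1 h2] /andP[h3 h4]; apply/andP; split; lra.
    apply: (graph_diff ha ha0 he he0).
    + by apply: hLa' => //; apply: ltW.
    + by apply: hLb' => //; apply: ltW.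
    + exact: hMa.
    + exact: hMb.
  by apply: hc; rewrite !inE; apply/andP; split => //; apply/eqP.
move=> sq us.
have W0 : 0 <= 2%:R * C * s * s ^+ d.
  by apply: mulr_ge0; [apply: mulr_ge0; [apply: mulr_ge0|apply: ltW] | apply: exprn_ge0; apply: ltW].
have vol : forall f, act f -> \prod_(q in D) (hi f q - lo f q) = 2%:R * C * s * s ^+ d.
  move=> f _; rewrite (big_setD1 p pD) /= /hi /lo eqxx.
  rewrite -/D' (eq_bigr (fun=> s)); last first.
    by move=> q; rewrite !inE => /andP[qp _]; rewrite (negbTE qp); ring.
  rewrite prodr_const -/d; ring.
pose V f := if act f then \prod_(q in D) (hi f q - lo f q) else 0.
have V0 : forall f, 0 <= V f.
  by move=> f; rewrite /V; case: ifP => // hf; rewrite vol.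
rewrite big_mkcond /=.
apply: (le_trans (sum_sub_uniq us (index_enum_uniq _) (fun f _ => mem_index_enum f) V0)).
apply: (@le_trans _ _ (\sum_(f : {ffun P -> 'I_K.+1}) (valid f)%:R * (2%:R * C * s * s ^+ d))).
  apply: ler_sum => f _; rewrite /V; case: ifP => hf.
    by rewrite vol //; move: hf; rewrite /act => /andP[-> _]; rewrite mul1r.
  by apply: mulr_ge0.
rewrite -mulr_suml count_valid.
have hK : K.+1%:R * s <= (2 * n + 1)%:R.
  have eK : K.+1%:R = 2%:R * n%:R * N%:R + 1 :> R by rewrite /K -addn1 !natrD !natrM.
  have hs1 : s <= 1 by rewrite /s invf_le1 // ler1n.
  have eNs : N%:R * s = 1 by rewrite /s mulfV // gt_eqF.
  rewrite eK mulrDl mul1r -mulrA eNs mulr1 natrD natrM; lra.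
apply: le_trans QN.
rewrite /Q /s.
have e1 : K.+1%:R ^+ d * (2%:R * C * N%:R^-1 * N%:R^-1 ^+ d)
   = 2%:R * C * (K.+1%:R * N%:R^-1) ^+ d / N%:R by rewrite exprMn; ring.
rewrite e1 ler_pM2r ?invr_gt0 //; apply: ler_wpM2l.
  by apply: mulr_ge0.
apply: lerXn2r => //; rewrite nnegrE ?ler0n //.
by apply: mulr_ge0 => //; apply: ltW.
Qed.


Definition upd (th : P -> R) (p : P) (t : R) : P -> R := fun q => if q == p then t else th q.
Definition dep D (f : (P -> R) -> R) := forall th th', (forall q, q \in D -> th q = th' q) -> f th = f th'.
Definition aff p (f : (P -> R) -> R) :=
  forall th t, f (upd th p t) = f (upd th p 0) + t * (f (upd th p 1) - f (upd th p 0)).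
Definition MA D f := dep D f /\ forall p, aff p f.

Lemma upd_id th p : upd th p (th p) = th.
Proof. by apply: funext => q; rewrite /upd; case: eqP => // ->. Qed.
Lemma upd_upd th p t t' : upd (upd th p t) p t' = upd th p t'.
Proof. by apply: funext => q; rewrite /upd; case: eqP. Qed.
Lemma upd_comm th p q t t' : p != q -> upd (upd th p t) q t' = upd (upd th q t') p t.
Proof.
move=> pq; apply: funext => r; rewrite /upd; case: (eqVneq r q) => [->|//].
by rewrite eq_sym (negbTE pq).
Qed.

Lemma aff_fix p c f : (forall q, aff q f) -> forall q, aff q (fun th => f (upd th p c)).
Proof.
move=> hf q th t /=; case: (eqVneq q p) => [->|qp].
  by rewrite !upd_upd; ring.
by rewrite !(upd_comm _ _ _ qp) hf.
Qed.

Lemma dep_fix D p c f : dep D f -> dep (D :\ p) (fun th => f (upd th p c)).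
Proof.
move=> hf th th' h /=; apply: hf => q qD; rewrite /upd; case: eqP => // /eqP qp.
by apply: h; rewrite !inE qp.
Qed.

Lemma aff_sub p f g : aff p f -> aff p g -> aff p (fun th => f th - g th).
Proof. by move=> hf hg th t /=; rewrite hf hg; ring. Qed.

Lemma MA_split D p f : MA D f -> p \in D ->
  [/\ MA (D :\ p) (fun th => f (upd th p 1) - f (upd th p 0)),
      MA (D :\ p) (fun th => f (upd th p 0)) &
      forall th, f th = (f (upd th p 1) - f (upd th p 0)) * th p + f (upd th p 0)].
Proof.
move=> [hd ha] pD; split.
- split.
    move=> th th' h; congr (_ - _); exact: (dep_fix 1 hd h) || exact: (dep_fix 0 hd h).
  by move=> q; apply: aff_sub; apply: aff_fix.
- by split; [apply: dep_fix | apply: aff_fix].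
move=> th; have := ha p th (th p); rewrite upd_id => ->; ring.
Qed.

Lemma MA_LB D f : MA D f -> LB D f.
Proof.
move: {2}#|D| (erefl #|D|) => k; elim: k D f => [|k IH] D f hk hf.
  have D0 := cards0_eq hk; subst D.
  have hc : forall th, f th = f (fun _ => 0) by move=> th; apply: hf.1 => q; rewrite inE.
  move=> n; exists `|f (fun _ => 0)|, 0; split => //.
    by move=> th _; rewrite hc.
  by move=> th th' s _ _ _ _; rewrite !hc subrr normr0 mul0r.
have [p pD] : exists p, p \in D.
  by apply/set0Pn; apply/eqP => D0; rewrite D0 cards0 in hk.
have hk' : #|D :\ p| = k by move: hk; rewrite (cardsD1 p D) pD add1n => -[].
have [hA hB hf'] := MA_split hf pD.
move=> n.
have [Ma [La [Ma0 La0 hMa hLa]]] := IH _ _ hk' hA n.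
have [Mb [Lb [Mb0 Lb0 hMb hLb]]] := IH _ _ hk' hB n.
have sub : forall th, inbox D n th -> inbox (D :\ p) n th.
  by move=> th h q; rewrite inE => /andP[_]; apply: h.
exists (Mb + n%:R * Ma), (Lb + n%:R * La + Ma); split.
- by apply: addr_ge0 => //; apply: mulr_ge0.
- by apply: addr_ge0 => //; apply: addr_ge0 => //; apply: mulr_ge0.
- move=> th hth; rewrite hf'.
  set A := (f (upd th p 1) - f (upd th p 0)); set B := f (upd th p 0).
  have h1 : `|A| <= Ma by apply: hMa; apply: sub.
  have h2 : `|B| <= Mb by apply: hMb; apply: sub.
  have h3 := hth p pD.
  apply: le_trans (ler_normD _ _) _; rewrite normrM.
  have := normr_ge0 A; have := normr_ge0 (th p); nra.
move=> th th' s s0 hth hth' hd; rewrite (hf' th) (hf' th').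
set A := (f (upd th p 1) - f (upd th p 0)); set B := f (upd th p 0).
set A' := (f (upd th' p 1) - f (upd th' p 0)); set B' := f (upd th' p 0).
have hd' : forall q, q \in D :\ p -> `|th q - th' q| <= s.
  by move=> q; rewrite inE => /andP[_]; apply: hd.
have h1 : `|A - A'| <= La * s by apply: hLa => //; apply: sub.
have h2 : `|B - B'| <= Lb * s by apply: hLb => //; apply: sub.
have h3 : `|A'| <= Ma by apply: hMa; apply: sub.
have h4 := hth p pD.
have h5 := hd p pD.
have -> : A * th p + B - (A' * th' p + B') = (A - A') * th p + A' * (th p - th' p) + (B - B') by ring.
apply: le_trans (ler_normD _ _) _; apply: le_trans (lerD (ler_normD _ _) (lexx _)) _.
rewrite !normrM.
have := normr_ge0 (A - A'); have := normr_ge0 A'; have := normr_ge0 (th p); have := normr_ge0 (th p - th' p).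
nra.
Qed.

Lemma MA_null D f : MA D f -> (exists th, f th != 0) -> nullD D (fun th => f th = 0).
Proof.
move: {2}#|D| (erefl #|D|) => k; elim: k D f => [|k IH] D f hk hf [th0 h0].
  have D0 := cards0_eq hk; subst D.
  apply: nullD_sub (nullD0 _) => th hth; move: h0.
  by rewrite (hf.1 th0 th) ?hth ?eqxx // => q; rewrite inE.
have [p pD] : exists p, p \in D.
  by apply/set0Pn; apply/eqP => D0; rewrite D0 cards0 in hk.
have hk' : #|D :\ p| = k by move: hk; rewrite (cardsD1 p D) pD add1n => -[].
have [hA hB hf'] := MA_split hf pD.
have pD' : p \notin D :\ p by rewrite !inE eqxx.
have ext : forall A, nullD (D :\ p) A -> nullD D A.
  by move=> A /(nullD_ext pD'); rewrite setD1K.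
set a := fun th => f (upd th p 1) - f (upd th p 0).
set b := fun th => f (upd th p 0).
case: (pselect (exists th, a th != 0)) => [ha|ha].
  apply: (@nullD_sub _ _ (fun th => exists c : bool, if c then a th = 0 else a th != 0 /\ a th * th p + b th = 0)).
    move=> th hth; case: (eqVneq (a th) 0) => [e|ne]; first by exists true.
    by exists false; split => //; rewrite -hf'.
  apply: nullD_union_count => -[].
    by apply: ext; apply: IH.
  by apply: nullD_graph => //; apply: MA_LB.
have a0 : forall th, a th = 0 by move=> th; apply/eqP; apply/negPn/negP => h; apply: ha; exists th.
have fb : forall th, f th = b th.
  by move=> th; rewrite hf'; have := a0 th; rewrite /a /b => ->; rewrite mul0r add0r.
apply: ext; apply: nullD_sub (IH _ b hk' hB _) => [th|].
  by rewrite fb.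
by exists th0; rewrite -fb.
Qed.


Lemma nullD_setT (p0 : P) A : nullD setT A -> lebesgue_null A.
Proof.
move=> h eps e0; have [act [a [b [h1 h2 h3]]]] := h eps e0.
exists (fun m p => if act m then a m p else 0), (fun m p => if act m then b m p else 0); split.
  by move=> m p; case: (act m).
split.
  move=> th /h2 [m [am hm]]; exists m => p; rewrite am; apply: hm; by rewrite inE.
move=> N; apply: le_trans (h3 N); rewrite [X in X <= _]big_mkcond /= le_eqVlt; apply/orP; left; apply/eqP.
rewrite [RHS]big_mkcond; apply: eq_bigr => m _; case: (act m) => /=.
  by apply: eq_bigl => p; rewrite inE.
by rewrite (bigD1 p0) //= subrr mul0r.
Qed.

End Null.

Section Netw.
Variables (R : realType) (n0 : nat) (ws : seq nat) (K : nat).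
Local Notation PT := (Param n0 ws K).
Local Notation UT := (Unit n0 ws).
Implicit Types (th : PT -> R) (kJ kA kB : UT -> 'I_K) (x : 'I_n0 -> R) (u : UT).

Fixpoint layerJ th kJ x (l : nat) : nat -> R :=
  if l is l'.+1 then fun z =>
    match (insub l' : option 'I_(size ws)) with
    | Some lo => match (insub z : option 'I_(wd n0 ws (nat_of_ord lo).+1)) with
        | Some zo => preact th (layerJ th kJ x l') zo (kJ (existT _ lo zo))
        | None => 0 end
    | None => 0 end
  else fun j => if (insub j : option 'I_n0) is Some jo then x jo else 0.

Definition netJ th kJ x := \sum_(z < wd n0 ws (size ws))
  th (inr (Some z)) * layerJ th kJ x (size ws) z + th (inr None).

Lemma maxK_eq (g : 'I_K -> R) k : (forall k', g k' <= g k) -> maxK g = g k.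
Proof.
move=> hg; rewrite /maxK; apply/eqP; rewrite eq_le; apply/andP; split.
  apply: (big_ind (fun y => y <= g k)) => //.
    have : k \in enum 'I_K by rewrite mem_enum.
    by case: (enum 'I_K) => //= k1 s _; apply: hg.
  by move=> y1 y2 h1 h2; rewrite ge_max h1 h2.
by rewrite (bigD1 k) //= le_max lexx.
Qed.

Lemma layer_agree th J kJ x : act_region th J x -> (forall u, kJ u \in J u) ->
  forall l z, layer th x l z = layerJ th kJ x l z.
Proof.
move=> hJ hk; elim=> [|l IH] z //=.
case: insubP => [lo _ elo|_] //; case: insubP => [zo _ ezo|_] //.
have e : layer th x l = layerJ th kJ x l by apply: funext.
rewrite -e; apply: maxK_eq => k'.
have := hk (existT _ lo zo); rewrite -(hJ (existT _ lo zo)) inE => /forallP /(_ k').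
by rewrite /zeta /= elo.
Qed.


Definition affx (F : ('I_n0 -> R) -> R) :=
  exists (al : 'I_n0 -> R) (c : R), forall x, F x = \sum_i al i * x i + c.

Lemma affx_lin m (w : 'I_m -> R) (F : 'I_m -> ('I_n0 -> R) -> R) (b : R) :
  (forall j, affx (F j)) -> affx (fun x => \sum_j w j * F j x + b).
Proof.
move=> hF; have [al hal] := fin_all_exists hF.
have [c hc] := fin_all_exists hal.
exists (fun i => \sum_j w j * al j i), (\sum_j w j * c j + b) => x.
rewrite addrA; congr (_ + _).
under eq_bigr => j _ do rewrite hc mulrDr mulr_sumr.
rewrite big_split /=; congr (_ + _).
rewrite exchange_big /=; apply: eq_bigr => i _.
by rewrite mulr_suml; apply: eq_bigr => j _; rewrite mulrA.
Qed.

Lemma affx_preact th kJ l (lo : 'I_(size ws)) (zo : 'I_(wd n0 ws lo.+1)) k :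
  (forall z, affx (fun x => layerJ th kJ x l z)) ->
  affx (fun x => preact th (layerJ th kJ x l) zo k).
Proof. by move=> h; rewrite /preact; apply: affx_lin. Qed.

Lemma affx_layer th kJ l z : affx (fun x => layerJ th kJ x l z).
Proof.
elim: l z => [|l IH] z /=.
  case: insubP => [jo _ _|_].
    exists (fun i => (i == jo)%:R), 0 => x.
    rewrite addr0 (bigD1 jo) //= eqxx mul1r big1 ?addr0 // => i /negbTE ->; by rewrite mul0r.
  by exists (fun=> 0), 0 => x; rewrite big1 ?addr0 // => i _; rewrite mul0r.
case: insubP => [lo _ _|_]; last by exists (fun=> 0), 0 => x; rewrite big1 ?addr0 // => i _; rewrite mul0r.
case: insubP => [zo _ _|_]; last by exists (fun=> 0), 0 => x; rewrite big1 ?addr0 // => i _; rewrite mul0r.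
exact: affx_preact.
Qed.

Lemma affx_netJ th kJ : affx (netJ th kJ).
Proof. by apply: affx_lin => z; apply: affx_layer. Qed.

Lemma affx_grad F (g : 'I_n0 -> R) c x0 r : affx F -> 0 < r ->
  (forall x, in_ball x0 r x -> F x = \sum_i g i * x i + c) ->
  F (fun _ => 1) - F (fun _ => 0) = \sum_i g i.
Proof.
move=> [al [c' hF]] r0 hb.
have hx0 : in_ball x0 r x0 by move=> i; rewrite subrr normr0.
have eq_al : forall i, al i = g i.
  move=> i.
  pose x1 := fun j => x0 j + r / 2%:R * (j == i)%:R.
  have hx1 : in_ball x0 r x1.
    move=> j; rewrite /x1 addrC addKr normrM.
    have h2 : `|r / 2%:R| < r by rewrite ger0_norm ?divr_ge0 ?ler0n ?ltW // ltr_pdivrMr ?ltr0n //; lra.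
    by case: (j == i); rewrite ?normr1 ?normr0 ?mulr1 ?mulr0.
  have lin : forall (v : 'I_n0 -> R), \sum_j v j * x1 j = \sum_j v j * x0 j + v i * (r / 2%:R).
    move=> v; rewrite /x1; under eq_bigr => j _ do rewrite mulrDr.
    rewrite big_split /=; congr (_ + _).
    rewrite (bigD1 i) //= eqxx mulr1 big1 ?addr0 // => j /negbTE ->; by rewrite mulr0 mulr0.
  have e1 := hb _ hx1; have e0 := hb _ hx0.
  rewrite hF !lin in e1; rewrite hF in e0.
  have h' : (al i - g i) * (r / 2%:R) = 0 by lra.
  move/eqP: h'; rewrite mulf_eq0 subr_eq0 => /orP[/eqP //|].
  by rewrite mulf_eq0 invr_eq0 pnatr_eq0 orbF gt_eqF.
rewrite !hF.
have -> : \sum_i al i * 0 = 0 by rewrite big1 // => i _; rewrite mulr0.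
rewrite add0r addrK; apply: eq_bigr => i _; by rewrite mulr1 eq_al.
Qed.


Definition indep (p : PT) (f : (PT -> R) -> R) := forall th t, f (upd th p t) = f th.

Lemma indep_aff p f : indep p f -> aff p f.
Proof. by move=> h th t; rewrite !h; ring. Qed.

Lemma aff_add p f g : aff p f -> aff p g -> aff p (fun th => f th + g th).
Proof. by move=> hf hg th t /=; rewrite hf hg; ring. Qed.

Lemma aff_sum p m (F : 'I_m -> (PT -> R) -> R) :
  (forall j, aff p (F j)) -> aff p (fun th => \sum_j F j th).
Proof.
move=> hF th t /=.
rewrite (eq_bigr _ (fun j _ => hF j th t)) big_split /= -sumrB mulr_sumr.
by [].
Qed.

Lemma aff_mulc p q (H : (PT -> R) -> R) :
  (q = p -> indep p H) -> (q != p -> aff p H) -> aff p (fun th => th q * H th).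
Proof.
move=> h1 h2 th t /=; case: (eqVneq q p) => [e|ne].
  have hi := h1 e; subst q; rewrite !hi /upd eqxx; ring.
rewrite (h2 ne) /upd (negbTE ne); ring.
Qed.

Lemma aff_coord p q : aff p (fun th => th q).
Proof.
by move=> th t; rewrite /upd; case: (q == p); ring.
Qed.

Definition pl (p : PT) : nat := match p with inl s => nat_of_ord (tag s) | inr _ => size ws end.

Lemma layerJ_indep kJ x l z p : (l <= pl p)%N -> indep p (fun th => layerJ th kJ x l z).
Proof.
elim: l z => [|l IH] z hl th t //=.
case: insubP => [lo _ elo|_] //; case: insubP => [zo _ _|_] //.
rewrite /preact; congr (_ + _).
  apply: eq_bigr => j _; congr (_ * _); last by apply: IH; apply: ltnW.
  rewrite /upd; case: eqP => // hp; by rewrite -hp /= elo ltnn in hl.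
rewrite /upd; case: eqP => // hp; by rewrite -hp /= elo ltnn in hl.
Qed.

Lemma aff_preact kJ x l (lo : 'I_(size ws)) (zo : 'I_(wd n0 ws lo.+1)) k p :
  nat_of_ord lo = l -> (forall z, aff p (fun th => layerJ th kJ x l z)) ->
  aff p (fun th => preact th (layerJ th kJ x l) zo k).
Proof.
move=> elo hA; rewrite /preact; apply: aff_add; last exact: aff_coord.
apply: aff_sum => j; apply: aff_mulc => [hp|_]; last exact: hA.
by apply: layerJ_indep; rewrite -hp /= elo.
Qed.

Lemma layerJ_aff kJ x l z p : aff p (fun th => layerJ th kJ x l z).
Proof.
elim: l z => [|l IH] z /=; first by apply: indep_aff.
case: insubP => [lo _ elo|_]; last by apply: indep_aff.
case: insubP => [zo _ _|_]; last by apply: indep_aff.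
exact: aff_preact.
Qed.

Lemma netJ_aff kJ x p : aff p (fun th => netJ th kJ x).
Proof.
rewrite /netJ; apply: aff_add; last exact: aff_coord.
apply: aff_sum => z; apply: aff_mulc => [hp|_]; last exact: layerJ_aff.
by apply: layerJ_indep; rewrite -hp.
Qed.


Definition wstar (u : UT) (k' : 'I_K) (p : PT) : R :=
  match p with
  | inl (existT lo (zo, k, Some _)) => if ((existT _ lo zo : UT) == u) && (k == k') then 0 else 1
  | inl (existT _ (_, _, None)) => 0
  | inr (Some _) => 1
  | inr None => 0
  end.

Lemma layer_zero kJ u k' l z : layerJ (wstar u k') kJ (fun _ => 0) l z = 0.
Proof.
elim: l z => [|l IH] z /=; first by case: insubP.
case: insubP => [lo _ _|_] //; case: insubP => [zo _ _|_] //.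
rewrite /preact big1 /= ?add0r // => j _; by rewrite IH mulr0.
Qed.

Lemma layer_nonneg kJ u k' l z : 0 <= layerJ (wstar u k') kJ (fun _ => 1) l z.
Proof.
elim: l z => [|l IH] z /=; first by case: insubP.
case: insubP => [lo _ _|_] //; case: insubP => [zo _ _|_] //.
rewrite /preact /= addr0; apply: sumr_ge0 => j _; apply: mulr_ge0 => //.
by case: ifP.
Qed.

Hypothesis hwd : forall l, (l <= size ws)%N -> (0 < wd n0 ws l)%N.

Lemma wt1 kJ u k' (lo : 'I_(size ws)) (zo : 'I_(wd n0 ws lo.+1)) :
  kJ u != k' -> ((existT _ lo zo : UT) == u) && (kJ (existT _ lo zo) == k') = false.
Proof. by move=> hk; case: eqP => [->|//]; rewrite (negbTE hk). Qed.

Lemma sum_ge_term m (F : 'I_m -> R) j0 : (forall j, 0 <= F j) -> F j0 <= \sum_j F j.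
Proof. by move=> h; rewrite (bigD1 j0) //= lerDl sumr_ge0. Qed.

Lemma layer_ge1 kJ u k' l z : kJ u != k' -> (l <= size ws)%N -> (z < wd n0 ws l)%N ->
  1 <= layerJ (wstar u k') kJ (fun _ => 1) l z.
Proof.
move=> hk; elim: l z => [|l IH] z hl hz /=.
  by case: insubP => [//|]; rewrite hz.
case: insubP => [lo _ elo|]; last by rewrite hl.
case: insubP => [zo _ ezo|h]; last by exfalso; move/negP: h; apply; move: hz; rewrite -elo.
rewrite /preact /= wt1 // addr0.
have h0 : (0 < wd n0 ws lo)%N by apply: hwd; rewrite elo ltnW.
apply: le_trans (sum_ge_term (Ordinal h0) _).
  rewrite mul1r; apply: IH; first exact: ltnW.
  by rewrite /= -elo.
by move=> j; rewrite mul1r; apply: layer_nonneg.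
Qed.

Lemma layer_mono kA kB u k' l z : kA u != k' ->
  layerJ (wstar u k') kB (fun _ => 1) l z <= layerJ (wstar u k') kA (fun _ => 1) l z.
Proof.
move=> hA; elim: l z => [|l IH] z /=; first by [].
case: insubP => [lo _ elo|_] //; case: insubP => [zo _ ezo|_] //.
rewrite /preact /= (wt1 (kJ := kA)) // !addr0; apply: ler_sum => j _.
case: ifP => _; rewrite ?mul0r ?mul1r ?IH //.
exact: layer_nonneg.
Qed.


Lemma eta_unit (u : UT) : (existT _ (tag u) (tagged u) : UT) = u.
Proof. by case: u. Qed.

Lemma layer_strict kA kB u k' m : kA u != k' -> kB u = k' -> ((tag u).+1 + m <= size ws)%N ->
  exists z, (z < wd n0 ws ((tag u).+1 + m))%N /\
    layerJ (wstar u k') kB (fun _ => 1) ((tag u).+1 + m) z <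
    layerJ (wstar u k') kA (fun _ => 1) ((tag u).+1 + m) z.
Proof.
move=> hA hB; elim: m => [|m IH] hl.
  rewrite addn0 in hl *; exists (tagged u); split; first exact: ltn_ord.
  rewrite /=; case: insubP => [lo _ elo|h]; last by rewrite ltn_ord in h.
  have elo' : lo = tag u by apply: val_inj.
  subst lo.
  case: insubP => [zo _ ezo|h]; last by rewrite ltn_ord in h.
  have ezo' : zo = tagged u by apply: val_inj.
  subst zo.
  rewrite /preact /= !eta_unit eqxx hB eqxx (negbTE hA) /= !addr0.
  rewrite big1 => [|j _]; last by rewrite mul0r.
  have h0 : (0 < wd n0 ws (tag u))%N by apply: hwd; apply: ltnW.
  apply: lt_le_trans (sum_ge_term (Ordinal h0) _); first by rewrite mul1r; apply: (lt_le_trans ltr01); apply: layer_ge1 => //; apply: ltnW; exact: ltn_ord.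
  by move=> j; rewrite mul1r; apply: layer_nonneg.
have hl' : ((tag u).+1 + m <= size ws)%N by apply: leq_trans hl; rewrite addnS.
have [z0 [hz0 hlt]] := IH hl'.
move: hl; rewrite addnS => hl.
set l := ((tag u).+1 + m)%N in hz0 hlt hl *.
have hlu : (tag u < l)%N by rewrite /l ltnS leq_addr.
clearbody l.
exists 0%N; split; first exact: hwd.
rewrite /=; case: insubP => [lo _ elo|h]; last by rewrite hl in h.
case: insubP => [zo _ ezo|h]; last by move: h; rewrite (@hwd (nat_of_ord lo).+1 (ltn_ord lo)).
have hv : (existT _ lo zo : UT) != u.
  apply/eqP => e; have : tag (existT _ lo zo : UT) = tag u by rewrite e.
  move=> /= /(f_equal val); rewrite elo => e2.
  by move: hlu; rewrite e2 ltnn.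
rewrite /preact /= (negbTE hv) /= !addr0 ?ltrD2r.
have hz0' : (z0 < wd n0 ws lo)%N by rewrite elo.
rewrite (bigD1 (Ordinal hz0')) // [X in _ < X](bigD1 (Ordinal hz0')) // !mul1r.
apply: ltr_leD; first exact: hlt.
apply: ler_sum => j _; rewrite !mul1r; by apply: layer_mono.
Qed.

Lemma net_zero kJ u k' : netJ (wstar u k') kJ (fun _ => 0) = 0.
Proof. by rewrite /netJ big1 /= ?addr0 // => z _; rewrite layer_zero mulr0. Qed.

Lemma net_strict kA kB u k' : kA u != k' -> kB u = k' ->
  netJ (wstar u k') kB (fun _ => 1) < netJ (wstar u k') kA (fun _ => 1).
Proof.
move=> hA hB.
have hle : ((tag u).+1 <= size ws)%N := ltn_ord (tag u).
have := @layer_strict kA kB u k' (size ws - (tag u).+1) hA hB.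
rewrite subnKC // => /(_ (leqnn _)) [z0 [hz0 hlt]].
rewrite /netJ /= ?addr0 ?ltrD2r (bigD1 (Ordinal hz0)) // [X in _ < X](bigD1 (Ordinal hz0)) // !mul1r.
apply: ltr_leD => //; apply: ler_sum => j _; rewrite !mul1r; by apply: layer_mono.
Qed.

Definition tieT th kJ (u : UT) (k' : 'I_K) x :=
  preact th (layerJ th kJ x (tag u)) (tagged u) (kJ u) - preact th (layerJ th kJ x (tag u)) (tagged u) k'.

Lemma tie_pos kJ u k' : kJ u != k' ->
  0 < tieT (wstar u k') kJ u k' (fun _ => 1) - tieT (wstar u k') kJ u k' (fun _ => 0).
Proof.
move=> hk.
have e0 : forall k, preact (wstar u k') (layerJ (wstar u k') kJ (fun _ => 0) (tag u)) (tagged u) k = 0.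
  move=> k; rewrite /preact big1 => [|j _]; last by rewrite layer_zero mulr0.
  by rewrite add0r.
have e1' : preact (wstar u k') (layerJ (wstar u k') kJ (fun _ => 1) (tag u)) (tagged u) k' = 0.
  rewrite /preact big1 => [|j _]; first by rewrite add0r.
  by rewrite /= eta_unit !eqxx mul0r.
rewrite /tieT !e0 e1' !subr0 /preact addr0.
have h0 : (0 < wd n0 ws (tag u))%N by apply: hwd; apply: ltnW.
apply: lt_le_trans (sum_ge_term (Ordinal h0) _) => [|j].
  rewrite /= eta_unit eqxx (negbTE hk) /= mul1r.
  by apply: (lt_le_trans ltr01); apply: layer_ge1 => //; apply: ltnW; exact: ltn_ord.
by rewrite /= eta_unit eqxx (negbTE hk) /= mul1r; apply: layer_nonneg.
Qed.

End Netw.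

Section Final.
Variables (R : realType) (n0 : nat) (ws : seq nat) (K : nat).
Local Notation PT := (Param n0 ws K).
Local Notation UT := (Unit n0 ws).
Local Notation PatT := {ffun UT -> {set 'I_K}}.
Implicit Types (th : PT -> R) (x : 'I_n0 -> R) (kJ : UT -> 'I_K) (u : UT) (g : 'I_n0 -> R).

Definition S2 (J J' : PatT) (th : PT -> R) := exists g,
  [/\ is_pattern J, is_pattern J', J != J', region_has_gradient th J g & region_has_gradient th J' g].

Lemma net_eq th (J : PatT) (kJ : UT -> 'I_K) x : act_region th J x -> (forall u, kJ u \in J u) ->
  net th x = netJ th kJ x.
Proof.
move=> hJ hk; rewrite /net /netJ; congr (_ + _); apply: eq_bigr => z _.
by rewrite (layer_agree hJ hk).
Qed.

Lemma rhg_grad th (J : PatT) kJ g : (forall u, kJ u \in J u) -> region_has_gradient th J g ->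
  netJ th kJ (fun _ => 1) - netJ th kJ (fun _ => 0) = \sum_i g i.
Proof.
move=> hk [x0 [r [c [r0 h]]]].
apply: (affx_grad (affx_netJ th kJ) r0) => x hx.
have [ha he] := h x hx; rewrite -(net_eq ha hk); exact: he.
Qed.

Lemma affx_sub (F G : ('I_n0 -> R) -> R) : affx F -> affx G -> affx (fun x => F x - G x).
Proof.
move=> [a1 [c1 h1]] [a2 [c2 h2]]; exists (fun i => a1 i - a2 i), (c1 - c2) => x.
rewrite h1 h2.
have -> : \sum_i (a1 i - a2 i) * x i = \sum_i a1 i * x i - \sum_i a2 i * x i.
  by rewrite -sumrB; apply: eq_bigr => i _; rewrite mulrBl.
ring.
Qed.

Hypothesis hwd : forall l, (l <= size ws)%N -> (0 < wd n0 ws l)%N.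

Lemma diff_null (J J' : PatT) kJ (kJ' : UT -> 'I_K) u : (forall u, kJ u \in J u) -> (forall u, kJ' u \in J' u) ->
  kJ u != kJ' u ->
  nullD setT (fun th : PT -> R => exists g, region_has_gradient th J g /\ region_has_gradient th J' g).
Proof.
move=> hk hk' hu.
pose f (th : PT -> R) := (netJ th kJ (fun _ => 1) - netJ th kJ (fun _ => 0))
   - (netJ th kJ' (fun _ => 1) - netJ th kJ' (fun _ => 0)).
apply: (@nullD_sub _ _ _ _ (fun th => f th = 0)).
  by move=> th [g [h1 h2]]; rewrite /f (rhg_grad hk h1) (rhg_grad hk' h2) subrr.
apply: MA_null.
  split.
    by move=> th th' h; have -> : th = th' by apply: funext => q; apply: h; rewrite inE.
  by move=> p; apply: aff_sub; apply: aff_sub; apply: netJ_aff.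
exists (wstar R u (kJ' u)); rewrite /f !net_zero !subr0 subr_eq0 gt_eqF //.
exact: net_strict.
Qed.

Lemma tie_null (J : PatT) kJ u (k' : 'I_K) : (forall u, kJ u \in J u) -> k' \in J u -> k' != kJ u ->
  nullD setT (fun th : PT -> R => exists g, region_has_gradient th J g).
Proof.
move=> hk hk1 hk2.
pose f (th : PT -> R) := tieT th kJ u k' (fun _ => 1) - tieT th kJ u k' (fun _ => 0).
apply: (@nullD_sub _ _ _ _ (fun th => f th = 0)).
  move=> th [g [x0 [r [c [r0 h]]]]].
  have -> : f th = \sum_(i < n0) (0 : R).
    apply: (affx_grad (F := tieT th kJ u k') (c := 0) _ r0) => [|x hx].
      by apply: affx_sub; apply: affx_preact => z; apply: affx_layer.
    rewrite big1 ?add0r => [|i _]; last by rewrite mul0r.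
    have [ha _] := h x hx.
    have e : layer th x (tag u) = layerJ th kJ x (tag u).
      by apply: funext => z; apply: layer_agree.
    have z1 : zeta th x u k' <= zeta th x u (kJ u).
      by have := hk u; rewrite -(ha u) inE => /forallP.
    have z2 : zeta th x u (kJ u) <= zeta th x u k'.
      by move: hk1; rewrite -(ha u) inE => /forallP.
    move: z1 z2; rewrite /zeta /tieT e => z1 z2.
    by apply/eqP; rewrite subr_eq0 eq_le z1 z2.
  by rewrite big1.
apply: MA_null.
  split.
    by move=> th th' h; have -> : th = th' by apply: funext => q; apply: h; rewrite inE.
  by move=> p; apply: aff_sub; apply: aff_sub; apply: aff_preact => // z; apply: layerJ_aff.
exists (wstar R u k'); rewrite /f gt_eqF //.
by apply: tie_pos => //; rewrite eq_sym.
Qed.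

End Final.

Lemma pair_null (R : realType) (n0 : nat) (ws : seq nat) (K : nat) :
  all (fun w => 0 < w)%N ws ->
  forall J J' : {ffun Unit n0 ws -> {set 'I_K}}, nullD setT (@S2 R n0 ws K J J').
Proof.
move=> hws J J'.
case: (pselect (is_pattern J /\ is_pattern J' /\ J != J')) => [[pJ [pJ' nJ]]|hno]; last first.
  by apply: nullD_sub (nullD0 _) => th [g [a b c _ _]]; apply: hno.
case: (posnP n0) => [n00|n0p].
  apply: nullD_sub (nullD0 _) => th [g [_ _ _ [x0 [r [c [r0 h1]]]] [x0' [r' [c' [r0' h2]]]]]].
  have noi : 'I_n0 -> False by case=> m; rewrite n00.
  have [a1 _] := h1 x0 (fun i => False_ind _ (noi i)).
  have [a2 _] := h2 x0 (fun i => False_ind _ (noi i)).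
  move/negP: nJ; apply; apply/eqP/ffunP => v; by rewrite -(a1 v) -(a2 v).
have hwd : forall l, (l <= size ws)%N -> (0 < wd n0 ws l)%N.
  case=> [//|l] hl /=.
  by move/(all_nthP 0%N): hws; apply.
have [u0 hu0] : exists u0, J u0 != J' u0.
  apply/existsP; rewrite -negb_forall; apply: contra nJ => /forallP h.
  by apply/eqP/ffunP => v; apply/eqP.
have /set0Pn [k0 _] := pJ u0.
pose kJ (v : Unit n0 ws) := odflt k0 [pick k in J v].
pose kJ' (v : Unit n0 ws) := odflt k0 [pick k in J' v].
have hk : forall v, kJ v \in J v.
  move=> v; rewrite /kJ; case: pickP => [k //|h].
  by have /set0Pn [k hk] := pJ v; rewrite h in hk.
have hk' : forall v, kJ' v \in J' v.
  move=> v; rewrite /kJ'; case: pickP => [k //|h].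
  by have /set0Pn [k hk'] := pJ' v; rewrite h in hk'.
case: (pselect (exists v, kJ v != kJ' v)) => [[v hv]|hsame].
  by apply: nullD_sub (diff_null hwd hk hk' hv) => th [g [_ _ _ h1 h2]]; exists g.
have hs : forall v, kJ v = kJ' v.
  by move=> v; apply/eqP/negPn/negP => h; apply: hsame; exists v.
have : (exists k', k' \in J u0 /\ k' != kJ u0) \/ (exists k', k' \in J' u0 /\ k' != kJ' u0).
  case: (pselect (exists k', k' \in J u0 /\ k' != kJ u0)) => [h|h1]; first by left.
  case: (pselect (exists k', k' \in J' u0 /\ k' != kJ' u0)) => [h|h2]; first by right.
  exfalso; move/negP: hu0; apply; apply/eqP/setP => k.
  have e1 : (k \in J u0) = (k == kJ u0).
    apply/idP/eqP => [hk1|->]; last exact: hk.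
    by apply/eqP/negPn/negP => hn; apply: h1; exists k.
  have e2 : (k \in J' u0) = (k == kJ' u0).
    apply/idP/eqP => [hk1|->]; last exact: hk'.
    by apply/eqP/negPn/negP => hn; apply: h2; exists k.
  by rewrite e1 e2 hs.
case=> [[k' [hk1 hk2]]|[k' [hk1 hk2]]].
  by apply: nullD_sub (tie_null hwd hk hk1 hk2) => th [g [_ _ _ h1 _]]; exists g.
by apply: nullD_sub (tie_null hwd hk' hk1 hk2) => th [g [_ _ _ _ h2]]; exists g.
Qed.

Theorem lemma2 (R : realType) (n0 : nat) (ws : seq nat) (K : nat) :
  all (fun w => 0 < w)%N ws ->
  lebesgue_null (fun th : Param n0 ws K -> R =>
    exists (J J' : {ffun Unit n0 ws -> {set 'I_K}}) (g : 'I_n0 -> R),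
      [/\ is_pattern J, is_pattern J', J != J',
          region_has_gradient th J g & region_has_gradient th J' g]).
Proof.
move=> hws.
apply: (nullD_setT (inr None)).
apply: (@nullD_sub _ _ _ _ (fun th => exists JJ : {ffun Unit n0 ws -> {set 'I_K}} * {ffun Unit n0 ws -> {set 'I_K}},
   @S2 R n0 ws K JJ.1 JJ.2 th)).
  by move=> th [J [J' [g h]]]; exists (J, J'), g.
apply: nullD_union_count => -[J J'].
exact: pair_null.
Qed.
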